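(* Let $G$ and $H$ be isoclinic finite groups. Then $A_G(t)=A_H\left(\frac{|G|}{|H|}t\right)$ and $B_G(t)=B_H\left(\frac{|G|}{|H|}t\right)$.
   Context: For a finite group $G$ and $n\ge 0$, $G$ acts on $G^n$ by simultaneous conjugation. Let $G^{(n)}\subseteq G^n$ be the set of $n$-tuples of pairwise commuting elements. Let $\alpha_{G,n}$ (resp. $\beta_{G,n}$) be the number of $G$-orbits on $G^n$ (resp. on $G^{(n)}$), and set $A_G(t)=\sum_{n\ge0}\alpha_{G,n}t^n$, $B_G(t)=\sum_{n\ge0}\beta_{G,n}t^n$; these are rational functions of $t$. Two finite groups $G$ and $H$ are isoclinic if there exist isomorphisms $\theta:G/Z(G)\to H/Z(H)$ and $\phi:G'\to H'$ (where $G'$ is the commutator subgroup) such that $\phi([g_1,g_2])=[h_1,h_2]$ whenever $\theta(g_iZ(G))=h_iZ(H)$ for $i=1,2$; i.e. $\phi\circ a_G=a_H\circ(\theta\times\theta)$ where $a_G(g_1Z(G),g_2Z(G))=[g_1,g_2]$. *)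

(* Defs.v *)
From HB Require Import structures.
From mathcomp Require Import all_boot all_order all_algebra all_fingroup all_solvable.
Set Implicit Arguments. Unset Strict Implicit. Unset Printing Implicit Defensive.
Import GRing.Theory.

Local Open Scope group_scope.

Definition tuples_in (gT : finGroupType) (G : {set gT}) (n : nat)
  : {set {ffun 'I_n -> gT}} :=
  [set t : {ffun 'I_n -> gT} | [forall i, t i \in G]].

Definition comm_tuples_in (gT : finGroupType) (G : {set gT}) (n : nat)
  : {set {ffun 'I_n -> gT}} :=
  [set t in tuples_in G n | [forall i, forall j, t i * t j == t j * t i]].

Definition tconj (gT : finGroupType) (n : nat) (t : {ffun 'I_n -> gT}) (g : gT)
  : {ffun 'I_n -> gT} := [ffun i => t i ^ g].

Definition conj_orbit (gT : finGroupType) (G : {set gT}) (n : nat)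
  (t : {ffun 'I_n -> gT}) : {set {ffun 'I_n -> gT}} :=
  [set tconj t g | g in G].

Definition alpha (gT : finGroupType) (G : {set gT}) (n : nat) : nat :=
  #|[set conj_orbit G t | t in tuples_in G n]|.

Definition beta (gT : finGroupType) (G : {set gT}) (n : nat) : nat :=
  #|[set conj_orbit G t | t in comm_tuples_in G n]|.

Definition isoclinic (gT hT : finGroupType) (G : {group gT}) (H : {group hT}) : Prop :=
  exists theta : {morphism G / 'Z(G) >-> coset_of 'Z(H)},
  exists phi : {morphism [~: G, G] >-> hT},
    [/\ isom (G / 'Z(G)) (H / 'Z(H)) theta,
        isom [~: G, G] [~: H, H] phi &
        forall g1 g2 h1 h2,
          g1 \in G -> g2 \in G -> h1 \in H -> h2 \in H ->
          theta (coset 'Z(G) g1) = coset 'Z(H) h1 ->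
          theta (coset 'Z(G) g2) = coset 'Z(H) h2 ->
          phi [~ g1, g2] = [~ h1, h2]].

(* Main.v *)
Require Import Defs.
From HB Require Import structures.
From mathcomp Require Import all_boot all_order all_algebra all_fingroup all_solvable.
Import GRing.Theory.
Set Implicit Arguments. Unset Strict Implicit.

Lemma sum_fiber (A B : finType) (f : A -> B) (D : {set A}) (T : {set B}) (k : nat)
  (fD : forall a, a \in D -> f a \in T)
  (fib : forall b, b \in T -> #|[pred a in D | f a == b]| = k)
  (Phi : B -> nat) :
  \sum_(a in D) Phi (f a) = k * \sum_(b in T) Phi b.
Proof.
rewrite (partition_big f (mem T)) // big_distrr; apply: eq_bigr => b Tb.
rewrite (eq_bigr (fun _ => Phi b)); last by move=> a /andP[_ /eqP ->].
rewrite sum_nat_const -(fib b Tb); congr (_ * _).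
Qed.

Lemma tuple_fiber (A B : finType) (f : A -> B) (D : {set A}) (T : {set B}) (k : nat)
  (fD : forall a, a \in D -> f a \in T)
  (fib : forall b, b \in T -> #|[pred a in D | f a == b]| = k)
  m (P : pred {ffun 'I_m -> B}) :
  #|[pred t : {ffun 'I_m -> A} | [forall i, t i \in D] && P [ffun i => f (t i)]]|
  = k ^ m * #|[pred s : {ffun 'I_m -> B} | [forall i, s i \in T] && P s]|.
Proof.
rewrite -!sum1_card.
rewrite (partition_big (fun t : {ffun 'I_m -> A} => [ffun i => f (t i)])
   [pred s : {ffun 'I_m -> B} | [forall i, s i \in T] && P s]) /=; last first.
  move=> t /andP[/forallP Dt Pt]; rewrite /= Pt andbT; apply/forallP => i.
  by rewrite ffunE fD.
rewrite big_distrr /=; apply: eq_bigr => s /andP[/forallP Ts Ps].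
rewrite sum1_card muln1.
pose F := fun i : 'I_m => [pred a in D | f a == s i].
have -> : k ^ m = #|(family F : simpl_pred {ffun 'I_m -> A})|.
  have Hf : forall e : seq 'I_m, foldr muln 1 [seq #|F x| | x <- e] = k ^ size e.
    by elim => //= i e ->; rewrite expnS -(fib (s i) (Ts i)).
  by rewrite card_family /image_mem Hf -cardE card_ord.
apply: eq_card => t; rewrite !inE.
apply/idP/familyP.
  case/andP=> /andP[/forallP Dt _] /eqP Hs i; by rewrite !inE Dt -Hs ffunE eqxx.
move=> Ft.
have Dt : [forall i, t i \in D] by apply/forallP => i; have := Ft i; rewrite !inE => /andP[].
have ft : [ffun i => f (t i)] = s.
  by apply/ffunP => i; rewrite ffunE; have := Ft i; rewrite !inE => /andP[_ /eqP].
by rewrite unfold_in /= !inE Dt ft Ps eqxx.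
Qed.
Local Open Scope group_scope.

Lemma mul4g (gT : finGroupType) (a b c d : gT) : commute b c -> (a*b)*(c*d) = (a*c)*(b*d).
Proof. by move=> bc; rewrite -mulgA (mulgA b) bc -mulgA mulgA. Qed.

Lemma comm_central (gT : finGroupType) (K : {group gT}) z1 z2 h1 h2 :
  z1 \in 'Z(K) -> z2 \in 'Z(K) -> h1 \in K -> h2 \in K ->
  ([~ z1 * h1, z2 * h2] == 1) = ([~ h1, h2] == 1).
Proof.
move=> /centerP[K1 c1] /centerP[K2 c2] Kh1 Kh2.
have e1 : (z1 * h1) * (z2 * h2) = (z1 * z2) * (h1 * h2).
  by rewrite mul4g //; apply: commute_sym; apply: c2.
have e2 : (z2 * h2) * (z1 * h1) = (z1 * z2) * (h2 * h1).
  by rewrite mul4g ?(c2 _ K1) //; apply: commute_sym; apply: c1.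
apply/commgP/commgP; rewrite /commute e1 e2.
  by move/mulgI.
by move=> ->.
Qed.

Lemma coset_fiber (gT : finGroupType) (K Z : {group gT}) q :
  Z \subset K -> K \subset 'N(Z) -> q \in K / Z ->
  #|[pred x in K | coset Z x == q]| = #|Z|.
Proof.
move=> sZK nZK; rewrite -imset_coset => /imsetP[x0 Kx0 ->].
have Nx0 : x0 \in 'N(Z) by apply: (subsetP nZK).
rewrite -(card_rcoset Z x0); apply: eq_card => x; rewrite !inE.
apply/andP/idP => [[Kx /eqP e]|].
  by apply/rcoset_kercosetP => //; apply: (subsetP nZK).
move=> xZ; have Kx : x \in K.
  by case/rcosetP: xZ => z Zz ->; rewrite groupM // (subsetP sZK).
split => //; apply/eqP/rcoset_kercosetP => //; apply: (subsetP nZK).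
by []. Qed.

Lemma repr_quo_mem (gT : finGroupType) (K Z : {group gT}) q :
  Z \subset K -> K \subset 'N(Z) -> q \in K / Z -> repr q \in K.
Proof.
move=> sZK nZK; rewrite -imset_coset => /imsetP[x0 Kx0 ->].
have Nx0 : x0 \in 'N(Z) by apply: (subsetP nZK).
have := mem_repr_coset (coset Z x0); rewrite val_coset //.
by case/rcosetP => z Zz ->; rewrite groupM // (subsetP sZK).
Qed.

Lemma repr_coset_central (gT : finGroupType) (K : {group gT}) h :
  h \in K -> exists2 z, z \in 'Z(K) & repr (coset 'Z(K) h) = z * h.
Proof.
move=> Kh; have Nh : h \in 'N('Z(K)) by apply: (subsetP (normal_norm (center_normal K))).
have := mem_repr_coset (coset 'Z(K) h); rewrite val_coset //.
by case/rcosetP => z Zz ->; exists z.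
Qed.

Lemma tconj1 (gT : finGroupType) n : (@tconj gT n)^~ 1 =1 id.
Proof. by move=> t; apply/ffunP => i; rewrite ffunE conjg1. Qed.

Lemma tconjM (gT : finGroupType) n : forall x, act_morph (@tconj gT n) x.
Proof. by move=> t a b; apply/ffunP => i; rewrite !ffunE conjgM. Qed.

Definition tconj_action (gT : finGroupType) n := TotalAction (@tconj1 gT n) (@tconjM gT n).

Lemma orbits_burnside (gT : finGroupType) (G : {group gT}) n (S : {set {ffun 'I_n -> gT}}) :
  (forall t g, g \in G -> t \in S -> tconj t g \in S) ->
  (#|[set conj_orbit G t | t in S]| * #|G| = \sum_(a in G) #|[set t in S | tconj t a == t]|)%N.
Proof.
move=> stab.
have acts : [acts G, on S | tconj_action gT n].
  apply/actsP => a Ga x /=; apply/idP/idP; last exact: stab.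
  move=> Sxa; have -> : x = tconj (tconj x a) a^-1.
    by apply/ffunP => i; rewrite !ffunE conjgK.
  by apply: stab; rewrite ?groupV.
have FC := Frobenius_Cauchy acts.
transitivity (#|orbit (tconj_action gT n) G @: S| * #|G|)%N.
  by congr (_ * _)%N.
rewrite -FC; apply: eq_bigr => a Ga; apply: eq_card => t; rewrite !inE sub1set !inE.
by [].
Qed.

Definition Qp (X : Type) (c : X -> X -> bool) (b : bool) n (g : X) (t : {ffun 'I_n -> X}) : bool :=
  [forall i, c (t i) g] && (b ==> [forall i, forall j, c (t i) (t j)]).

Lemma Q_map (X Y : finType) (f : X -> Y) (D : {set X}) (c : X -> X -> bool) (c' : Y -> Y -> bool)
  (hc : forall x y, x \in D -> y \in D -> c x y = c' (f x) (f y)) b n g (t : {ffun 'I_n -> X}) :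
  g \in D -> (forall i, t i \in D) -> Qp c b g t = Qp c' b (f g) [ffun i => f (t i)].
Proof.
move=> Dg Dt; rewrite /Qp; congr andb; first by apply: eq_forallb => i; rewrite ffunE hc.
congr implb; apply: eq_forallb => i; apply: eq_forallb => j; by rewrite !ffunE hc.
Qed.

Lemma side_count (X Y : finType) (f : X -> Y) (D : {set X}) (T : {set Y}) (k : nat)
  (c : X -> X -> bool) (c' : Y -> Y -> bool)
  (hc : forall x y, x \in D -> y \in D -> c x y = c' (f x) (f y))
  (fD : forall a, a \in D -> f a \in T)
  (fib : forall b, b \in T -> #|[pred a in D | f a == b]| = k) b n :
  (\sum_(g in D) #|[pred t : {ffun 'I_n -> X} | [forall i, t i \in D] && Qp c b g t]|
  = k ^ n.+1 * \sum_(y in T) #|[pred s : {ffun 'I_n -> Y} | [forall i, s i \in T] && Qp c' b y s]|)%N.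
Proof.
transitivity (\sum_(g in D) (k ^ n * #|[pred s : {ffun 'I_n -> Y} | [forall i, s i \in T] && Qp c' b (f g) s]|))%N.
  apply: eq_bigr => g Dg; rewrite -(tuple_fiber fD fib (Qp c' b (f g))).
  apply: eq_card => t; rewrite !inE.
  case Dt: [forall i, t i \in D] => //=.
  by apply: (Q_map hc) => //; apply/forallP.
rewrite (sum_fiber fD fib (fun y => k ^ n * #|[pred s : {ffun 'I_n -> Y} | [forall i, s i \in T] && Qp c' b y s]|))%N.
by rewrite -big_distrr /= mulnA -expnS.
Qed.

From mathcomp Require Import ring.
Import Num.Theory.

Lemma final_arith (NG NH zg zh q S n : nat) : (0 < zg)%N -> (0 < zh)%N -> (0 < q)%N ->
  (NG * (zg * q) = zg ^ n.+1 * S)%N -> (NH * (zh * q) = zh ^ n.+1 * S)%N ->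
  (NG%:R = ((zg * q)%:R / (zh * q)%:R) ^+ n * NH%:R :> rat)%R.
Proof.
move=> zg0 zh0 q0 eG eH.
have eG' : (NG * q = zg ^ n * S)%N.
  by apply/eqP; rewrite -(eqn_pmul2l zg0) mulnCA eG expnS mulnA.
have eH' : (NH * q = zh ^ n * S)%N.
  by apply/eqP; rewrite -(eqn_pmul2l zh0) mulnCA eH expnS mulnA.
have key : (NG * zh ^ n = NH * zg ^ n)%N.
  have h : (NG * zh ^ n * q = NH * zg ^ n * q)%N.
    rewrite [LHS]mulnAC [RHS]mulnAC eG' eH'.
    by rewrite mulnAC [RHS]mulnC mulnA.
  by apply/eqP; rewrite -(eqn_pmul2r q0); apply/eqP.
have zgR : (zg%:R != 0 :> rat)%R by rewrite pnatr_eq0 -lt0n.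
have zhR : (zh%:R != 0 :> rat)%R by rewrite pnatr_eq0 -lt0n.
have qR : (q%:R != 0 :> rat)%R by rewrite pnatr_eq0 -lt0n.
have keyR : (NG%:R * zh%:R ^+ n = NH%:R * zg%:R ^+ n :> rat)%R.
  by rewrite -!natrX -!natrM key.
have -> : ((zg * q)%:R / (zh * q)%:R = zg%:R / zh%:R :> rat)%R.
  by rewrite !natrM GRing.invfM GRing.mulrACA GRing.mulfV // GRing.mulr1.
rewrite GRing.expr_div_n.
have zhn : (zh%:R ^+ n != 0 :> rat)%R by rewrite GRing.expf_neq0.
apply: (GRing.mulIf zhn).
rewrite keyR; field; done.
Qed.

Lemma fix_tconj (gT : finGroupType) n (t : {ffun 'I_n -> gT}) a :
  (tconj t a == t) = [forall i, [~ t i, a] == 1].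
Proof.
apply/eqP/forallP => [e i | h].
  by apply/conjg_fixP; have := congr1 (fun u : {ffun _ -> _} => u i) e; rewrite /= ffunE.
by apply/ffunP => i; rewrite ffunE; apply/conjg_fixP.
Qed.

Lemma alpha_fix (gT : finGroupType) (G : {group gT}) n a :
  #|[set t in tuples_in G n | tconj t a == t]| =
  #|[pred t : {ffun 'I_n -> gT} | [forall i, t i \in G] && Qp (fun x y : gT => [~ x, y] == 1) false a t]|.
Proof. by apply: eq_card => t; rewrite !inE fix_tconj /Qp andbT. Qed.

Lemma beta_fix (gT : finGroupType) (G : {group gT}) n a :
  #|[set t in comm_tuples_in G n | tconj t a == t]| =
  #|[pred t : {ffun 'I_n -> gT} | [forall i, t i \in G] && Qp (fun x y : gT => [~ x, y] == 1) true a t]|.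
Proof.
apply: eq_card => t; rewrite !inE fix_tconj /Qp /=.
have -> : [forall i, forall j, t i * t j == t j * t i] = [forall i, forall j, [~ t i, t j] == 1].
  apply: eq_forallb => i; apply: eq_forallb => j; by apply/eqP/commgP.
by case: [forall i, t i \in G]; case: [forall i, [~ t i, a] == 1]; case: [forall i, forall j, [~ t i, t j] == 1].
Qed.

Lemma alpha_burnside (gT : finGroupType) (G : {group gT}) n :
  (alpha G n * #|G| = \sum_(a in G)
  #|[pred t : {ffun 'I_n -> gT} | [forall i, t i \in G] && Qp (fun x y : gT => [~ x, y] == 1%g) false a t]|)%N.
Proof.
rewrite /alpha orbits_burnside; first by apply: eq_bigr => a _; rewrite alpha_fix.
move=> t g Gg; rewrite !inE => /forallP Gt; apply/forallP => i.
by rewrite ffunE groupJ.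
Qed.

Lemma beta_burnside (gT : finGroupType) (G : {group gT}) n :
  (beta G n * #|G| = \sum_(a in G)
  #|[pred t : {ffun 'I_n -> gT} | [forall i, t i \in G] && Qp (fun x y : gT => [~ x, y] == 1%g) true a t]|)%N.
Proof.
rewrite /beta orbits_burnside; first by apply: eq_bigr => a _; rewrite beta_fix.
move=> t g Gg; rewrite !inE => /andP[/forallP Gt /forallP Ct]; apply/andP; split.
  by apply/forallP => i; rewrite ffunE groupJ.
apply/forallP => i; apply/forallP => j; rewrite !ffunE -!conjMg.
by have /forallP/(_ j)/eqP -> := Ct i.
Qed.

Lemma side_G (gT hT : finGroupType) (G : {group gT}) (H : {group hT})
  (theta : {morphism G / 'Z(G) >-> coset_of 'Z(H)})
  (phi : {morphism [~: G, G] >-> hT})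
  (isoT : isom (G / 'Z(G)) (H / 'Z(H)) theta)
  (isoP : isom [~: G, G] [~: H, H] phi)
  (Hc : forall g1 g2 h1 h2,
          g1 \in G -> g2 \in G -> h1 \in H -> h2 \in H ->
          theta (coset 'Z(G) g1) = coset 'Z(H) h1 ->
          theta (coset 'Z(G) g2) = coset 'Z(H) h2 ->
          phi [~ g1, g2] = [~ h1, h2]) b n :
  (\sum_(a in G) #|[pred t : {ffun 'I_n -> gT} | [forall i, t i \in G] && Qp (fun x y : gT => [~ x, y] == 1%g) b a t]|
  = #|'Z(G)| ^ n.+1 * \sum_(y in H / 'Z(H)) #|[pred s : {ffun 'I_n -> coset_of 'Z(H)} | [forall i, s i \in H / 'Z(H)] && Qp (fun q1 q2 : coset_of 'Z(H) => [~ repr q1, repr q2] == 1%g) b y s]|)%N.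
Proof.
have sZG := center_sub G; have nZG := normal_norm (center_normal G).
have sZH := center_sub H; have nZH := normal_norm (center_normal H).
pose fG := fun g : gT => theta (coset 'Z(G) g).
have fGT : forall g, g \in G -> fG g \in H / 'Z(H).
  move=> g Gg; rewrite -(isom_im isoT); apply: mem_morphim; exact: mem_quotient.
apply: (@side_count _ _ fG).
- move=> x y Gx Gy.
  have Hx := repr_quo_mem sZH nZH (fGT x Gx).
  have Hy := repr_quo_mem sZH nZH (fGT y Gy).
  have e := Hc x y _ _ Gx Gy Hx Hy (esym (coset_reprK _)) (esym (coset_reprK _)).
  rewrite /= -e.
  have Cxy : [~ x, y] \in [~: G, G] by apply: mem_commg.
  apply/eqP/eqP => [-> | e1]; first by rewrite morph1.
  apply: (injmP (isom_inj isoP)) => //; last by rewrite e1 morph1.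
- exact: fGT.
- move=> q; rewrite -(isom_im isoT) => /morphimP[q0 Dq0 Aq0 ->].
  rewrite -(coset_fiber sZG nZG Aq0); apply: eq_card => g; rewrite !inE.
  case Gg: (g \in G) => //=.
  apply/eqP/eqP => [e | e]; last by rewrite /fG e.
  by apply: (injmP (isom_inj isoT)) => //; apply: mem_quotient.
Qed.

Lemma side_H (hT : finGroupType) (H : {group hT}) b n :
  (\sum_(a in H) #|[pred t : {ffun 'I_n -> hT} | [forall i, t i \in H] && Qp (fun x y : hT => [~ x, y] == 1%g) b a t]|
  = #|'Z(H)| ^ n.+1 * \sum_(y in H / 'Z(H)) #|[pred s : {ffun 'I_n -> coset_of 'Z(H)} | [forall i, s i \in H / 'Z(H)] && Qp (fun q1 q2 : coset_of 'Z(H) => [~ repr q1, repr q2] == 1%g) b y s]|)%N.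
Proof.
have sZH := center_sub H; have nZH := normal_norm (center_normal H).
apply: (@side_count _ _ (coset 'Z(H))).
- move=> x y Hx Hy.
  have [z1 Z1 e1] := repr_coset_central Hx.
  have [z2 Z2 e2] := repr_coset_central Hy.
  by rewrite /= e1 e2 (comm_central Z1 Z2 Hx Hy).
- by move=> a Ha; apply: mem_quotient.
- by move=> q Hq; apply: coset_fiber.
Qed.

Lemma card_decomp (gT : finGroupType) (G : {group gT}) :
  #|G| = (#|'Z(G)| * #|G / 'Z(G)|)%N.
Proof.
by rewrite card_quotient ?(normal_norm (center_normal G)) // Lagrange // center_sub.
Qed.

Close Scope group_scope.
Unset Implicit Arguments. Set Strict Implicit.

Theorem theorem4p3 (gT hT : finGroupType) (G : {group gT}) (H : {group hT}) :
  isoclinic G H ->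
  (forall n : nat,
     ((alpha G n)%:R = (#|G|%:R / #|H|%:R) ^+ n * (alpha H n)%:R :> rat)%R) /\
  (forall n : nat,
     ((beta G n)%:R = (#|G|%:R / #|H|%:R) ^+ n * (beta H n)%:R :> rat)%R).
Proof.
case=> theta [phi [isoT isoP Hc]].
have qe : #|(G / 'Z(G))%g| = #|(H / 'Z(H))%g| by apply: isom_card isoT.
have zg0 : (0 < #|'Z(G)%g|)%N by apply: cardG_gt0.
have zh0 : (0 < #|'Z(H)%g|)%N by apply: cardG_gt0.
have q0 : (0 < #|(H / 'Z(H))%g|)%N by apply: cardG_gt0.
rewrite (card_decomp G) (card_decomp H) qe.
split => n; apply: final_arith => //.
- by rewrite -qe -card_decomp alpha_burnside (side_G isoT isoP Hc).
- by rewrite -card_decomp alpha_burnside side_H.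
- by rewrite -qe -card_decomp beta_burnside (side_G isoT isoP Hc).
- by rewrite -card_decomp beta_burnside side_H.
Qed.
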